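(* Let $q$ be a prime power, $\alpha$ a primitive element of $\mathbb{F}_q$, and let $P$ be the $(q-1)\times(q-1)$ matrix over $\mathbb{F}_q$ with rows and columns indexed by $0,1,\dots,q-2$, defined by $P(s,s)=0$ and $P(s,t)=\dfrac{\alpha^s}{\alpha^s-\alpha^t}$ for $s\neq t$. Then every $2\times 2$ submatrix of $P$ is invertible. *)

(* Defs.v *)
From mathcomp Require Import all_boot all_algebra all_field.
Set Implicit Arguments. Unset Strict Implicit. Unset Printing Implicit Defensive.
Import GRing.Theory.
Local Open Scope ring_scope.

Definition Pmx (F : fieldType) (n : nat) (a : F) : 'M[F]_n :=
  \matrix_(s < n, t < n) (if s == t then 0 else a ^+ s / (a ^+ s - a ^+ t)).

(* Main.v *)
Require Import Defs.
From mathcomp Require Import all_boot all_algebra all_field.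
Import GRing.Theory.
Local Open Scope ring_scope.
From mathcomp Require Import ring.

Lemma key (F : fieldType) (x1 x2 y1 y2 : F) : x1 != x2 -> y1 != y2 -> x1 != 0 -> x2 != 0 ->
  x1/(x1-y1) * (x2/(x2-y2)) - x1/(x1-y2)*(x2/(x2-y1)) != 0.
Proof.
move=> hx hy h1 h2.
have -> : x1/(x1-y1) * (x2/(x2-y2)) - x1/(x1-y2)*(x2/(x2-y1)) =
  (x1*x2) * ((x1-y1)^-1 * (x2-y2)^-1 - (x1-y2)^-1 * (x2-y1)^-1) by ring.
rewrite mulf_neq0 ?mulf_neq0 // subr_eq0.
set a := x1 - y1; set b := x2 - y2; set c := x1 - y2; set d := x2 - y1.
have ac : a != c by rewrite /a /c; apply: contra hy => /eqP h; apply/eqP; 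
  have := congr1 (fun z => x1 - z) h; rewrite !subKr.
have ad : a != d by rewrite /a /d; apply: contra hx => /eqP h; apply/eqP;
  have := congr1 (fun z => z + y1) h; rewrite !subrK.
have bc : b != c by rewrite /b /c; apply: contra hx => /eqP h; apply/eqP;
  have := congr1 (fun z => z + y2) h; rewrite !subrK => ->.
have bd : b != d by rewrite /b /d; apply: contra hy => /eqP h; apply/eqP;
  have := congr1 (fun z => x2 - z) h; rewrite !subKr => ->.
have sum : a + b = c + d by rewrite /a /b /c /d; ring.
apply/eqP => E.
have [a0|a0] := eqVneq a 0.
  move: E; rewrite a0 invr0 mul0r => /esym/eqP; rewrite mulf_eq0 !invr_eq0.
  case/orP=> /eqP z; [by move: ac; rewrite a0 z eqxx | by move: ad; rewrite a0 z eqxx].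
have [b0|b0] := eqVneq b 0.
  move: E; rewrite b0 invr0 mulr0 => /esym/eqP; rewrite mulf_eq0 !invr_eq0.
  case/orP=> /eqP z; [by move: bc; rewrite b0 z eqxx | by move: bd; rewrite b0 z eqxx].
have c0 : c != 0 by apply: contra_eq_neq E => ->; rewrite invr0 mul0r mulf_neq0 ?invr_eq0.
have d0 : d != 0 by apply: contra_eq_neq E => ->; rewrite invr0 mulr0 mulf_neq0 ?invr_eq0.
have P : a * b = c * d.
  have := congr1 GRing.inv E; rewrite !invfM !invrK => h; by rewrite h.
have : (a - c) * (a - d) = 0.
  have -> : (a - c) * (a - d) = a * (a + b - c - d) - a * b + c * d by ring.
  by rewrite sum P; ring.
by move/eqP; rewrite mulf_eq0 !subr_eq0 (negPf ac) (negPf ad).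
Qed.

Theorem lemma2p17 (F : finFieldType) (alpha : F)
  (halpha : (#|F|.-1).-primitive_root alpha)
  (f g : 'I_2 -> 'I_(#|F|.-1)) (hf : injective f) (hg : injective g) :
  mxsub f g (Pmx (#|F|.-1) alpha) \in unitmx.
Proof.
set n := #|F|.-1.
have inj : forall i j : 'I_n, (alpha ^+ i == alpha ^+ j) = (i == j).
  move=> i j; rewrite (eq_prim_root_expr halpha) !modn_small //.
have nz : forall i : 'I_n, alpha ^+ i != 0.
  move=> i; rewrite expf_neq0 //; apply/eqP => a0.
  have := prim_expr_order halpha; rewrite a0 expr0n.
  by rewrite eqn0Ngt (prim_order_gt0 halpha) /= => /eqP; rewrite eq_sym oner_eq0.
have ent : forall i j : 'I_n, (if i == j then 0 else alpha ^+ i / (alpha ^+ i - alpha ^+ j))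
   = alpha ^+ i / (alpha ^+ i - alpha ^+ j).
  move=> i j; case: eqP => // ->; by rewrite subrr invr0 mulr0.
rewrite unitmxE unitfE (expand_det_row _ ord0) !big_ord_recl big_ord0 addr0.
rewrite /cofactor !det_mx11 !mxE /= !ent.
have f01 : f ord0 != f (lift ord0 ord0) by apply/eqP => /hf.
have g01 : g ord0 != g (lift ord0 ord0) by apply/eqP => /hg.
have e1 : lift ord0 (0:'I_1) = lift ord0 ord0 :> 'I_2 by apply: val_inj.
have e2 : lift (lift ord0 ord0) (0:'I_1) = ord0 :> 'I_2 by apply: val_inj.
rewrite e1 e2 /= expr0 mul1r expr1 mulN1r mulrN.
have k := (@key F (alpha ^+ f ord0) (alpha ^+ f (lift ord0 ord0)) (alpha ^+ g ord0) (alpha ^+ g (lift ord0 ord0))).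
rewrite !inj !nz in k.
exact: (k f01 g01 isT isT).
Qed.
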